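(* Let $m,n\ge2$ be integers and let $H$ be the graph on the vertex set $\{x_{i,j}: i\in[m], j\in[n]\}$ with edge set $\{\{x_{i,j},x_{i',j+1}\}: 1\le i<i'\le m,\ 1\le j\le n-1\}$. Then \[\operatorname{match}(H)=(m-1)\left\lfloor\tfrac n2\right\rfloor+\left\lfloor\tfrac{n-1}2\right\rfloor.\]
   Context: $\operatorname{match}(H)$ is the maximum size of a matching (set of pairwise disjoint edges) in $H$. *)

(* Defs.v *)
From mathcomp Require Import all_boot.
Set Implicit Arguments. Unset Strict Implicit. Unset Printing Implicit Defensive.

(* A simple graph on a finite vertex type V is given by a relation e
   (assumed symmetric); its edges are the 2-sets {x,y} with e x y. *)
Definition is_edge (V : finType) (e : rel V) (A : {set V}) : bool :=
  [exists x, exists y, [&& x != y, e x y & A == [set x; y]]].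

Definition is_matching (V : finType) (e : rel V) (M : {set {set V}}) : bool :=
  [forall A in M, is_edge e A] && trivIset M.

Definition match_num (V : finType) (e : rel V) : nat :=
  \max_(M : {set {set V}} | is_matching e M) #|M|.

(* The graph H of the paper on vertices x_{i,j}, i in [m], j in [n]
   (0-based indices here): x_{i,j} ~ x_{i',j+1} whenever i < i'. *)
Definition Hadj (m n : nat) : rel ('I_m * 'I_n) :=
  fun u v =>
    ((u.1 < v.1) && (u.2.+1 == v.2)) || ((v.1 < u.1) && (v.2.+1 == u.2)).
Arguments Hadj : clear implicits.

(* Main.v *)
Require Import Defs.
From mathcomp Require Import all_boot.
From mathcomp Require Import zify.
Set Implicit Arguments. Unset Strict Implicit. Unset Printing Implicit Defensive.
Lemma card_pairP m n (P : nat -> nat -> bool) :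
  #|[set v : 'I_m * 'I_n | P v.1 v.2]| = \sum_(c < n) \sum_(i < m) (P i c : nat).
Proof.
rewrite -sum1_card big_mkcond /=.
rewrite exchange_big /= pair_big /=.
apply: eq_bigr => [[i c]] _; rewrite inE /=. by case: (P i c).
Qed.
Lemma sum_oddif k a b : \sum_(c < k) (if odd c then a else b) = k %/ 2 * a + (k - k %/ 2) * b.
Proof.
elim: k => [|k IH]; first by rewrite big_ord0.
rewrite big_ord_recr /= IH.
case: (boolP (odd k)) => Hk.
- have -> : k.+1 %/ 2 = (k %/ 2).+1 by lia.
  have -> : k.+1 - (k %/ 2).+1 = k - k %/ 2 by lia.
  rewrite mulSn; lia.
- have -> : k.+1 %/ 2 = (k %/ 2) by lia.
  have -> : k.+1 - (k %/ 2) = (k - k %/ 2).+1 by lia.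
  rewrite mulSn; lia.
Qed.
Lemma upper_sum m' n' : \sum_(c < n'.+1) \sum_(i < m'.+1) (odd c && ((c.+1 < n'.+1) || (0 < i)) : nat) <= m' * (n'.+1 %/ 2) + n' %/ 2.
Proof.
rewrite big_ord_recr /=.
rewrite (eq_bigr (fun c : 'I_n' => if odd c then m'.+1 else 0)); last first.
  move=> c _; under eq_bigr => i _ do rewrite /= ltnS ltn_ord orTb andbT.
  by rewrite sum_nat_const card_ord; case: odd; rewrite ?muln1 ?muln0.
rewrite sum_oddif big_ord_recl /= ltnn orFb andbF add0n.
under eq_bigr => i _ do rewrite /= andbT.
rewrite sum_nat_const card_ord.
have -> : n'.+1 %/ 2 = n' %/ 2 + odd n' by lia.
nia.
Qed.
Lemma lower_sum m' n' : m' * (n'.+1 %/ 2) + n' %/ 2 <= \sum_(c < n'.+1) \sum_(i < m'.+1) ((if odd c then (nat_of_ord i == 0) && (c.+1 < n'.+1) else (i.+1 < m'.+1) && (c.+1 < n'.+1)) : nat).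
Proof.
rewrite big_ord_recr /= ltnn.
rewrite (eq_bigr (fun c : 'I_n' => if odd c then 1 else m')); last first.
  move=> c _; under eq_bigr => i _ do rewrite /= ltnS ltn_ord !andbT.
  case: odd.
    rewrite big_ord_recl /= big1 ?addn0 //.
  rewrite big_ord_recr /= ltnn addn0.
  under eq_bigr => i _ do rewrite ltnS ltn_ord.
  by rewrite sum_nat_const card_ord muln1.
rewrite sum_oddif.
have -> : n'.+1 %/ 2 = n' - n' %/ 2 by lia.
nia.
Qed.


Theorem lemma4p1 (m n : nat) : 2 <= m -> 2 <= n ->
  match_num (Hadj m n) = (m - 1) * (n %/ 2) + (n - 1) %/ 2.
Proof.
case: m => // M HM; case: n => // N HN.
rewrite !subn1 /=.
apply/eqP; rewrite eqn_leq; apply/andP; split.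
- apply/bigmax_leqP => Mt /andP[Hedges Htriv].
  set T := [set v : ('I_M.+1 * 'I_N.+1) | odd v.2 && ((v.2.+1 < N.+1) || (0 < v.1))].
  pose phi (A : {set ('I_M.+1 * 'I_N.+1)}) : ('I_M.+1 * 'I_N.+1) := odflt (ord0, ord0) [pick v in A :&: T].
  have Hphi : forall A, A \in Mt -> phi A \in A /\ phi A \in T.
    move=> A HA; have := forallP Hedges A; rewrite HA /=.
    move=> /existsP[x /existsP[y /and3P[Hxy Hxy' /eqP HAe]]].
    have [v Hv] : exists v, v \in A :&: T.
      rewrite /Hadj in Hxy'; case/orP: Hxy' => /andP[H1 /eqP H2].
      + case Ho: (odd x.2).
          exists x; rewrite inE HAe set21 inE Ho /= H2 ltn_ord //.
        exists y; rewrite inE HAe set22 inE -H2 /= Ho /=; apply/orP; right; lia.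
      + case Ho: (odd y.2).
          exists y; rewrite inE HAe set22 inE Ho /= H2 ltn_ord //.
        exists x; rewrite inE HAe set21 inE -H2 /= Ho /=; apply/orP; right; lia.
    rewrite /phi; case: pickP => [w|/(_ v)]; last by rewrite Hv.
    by rewrite inE => /andP[].
  have Hinj : {in Mt &, injective phi}.
    move=> A B HA HB E; apply/eqP; apply: contraT => HAB.
    have := trivIsetP Htriv A B HA HB HAB; rewrite -setI_eq0 => /eqP D.
    have : phi A \in A :&: B by rewrite inE (Hphi A HA).1 E (Hphi B HB).1.
    by rewrite D inE.
  apply: (leq_trans _ (upper_sum M N)).
  rewrite -(card_pairP M.+1 N.+1 (fun i c => odd c && ((c.+1 < N.+1) || (0 < i)))).
  rewrite -(card_in_imset Hinj); apply: subset_leq_card.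
  by apply/subsetP => v /imsetP[A HA ->]; exact (Hphi A HA).2.
- set D := [set v : ('I_M.+1 * 'I_N.+1) | if odd v.2 then (nat_of_ord v.1 == 0) && (v.2.+1 < N.+1)
                        else (v.1.+1 < M.+1) && (v.2.+1 < N.+1)].
  pose mk (i c : nat) : ('I_M.+1 * 'I_N.+1) := (inord i, inord c).
  pose f (v : ('I_M.+1 * 'I_N.+1)) : {set ('I_M.+1 * 'I_N.+1)} := if odd v.2 then [set mk 0 v.2; mk M v.2.+1]
                              else [set mk v.1 v.2; mk v.1.+1 v.2.+1].
  have memf : forall v x, v \in D -> x \in f v ->
     if odd v.2 then ((nat_of_ord x.1 = 0 /\ nat_of_ord x.2 = v.2) \/ (nat_of_ord x.1 = M /\ nat_of_ord x.2 = v.2.+1))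
     else ((nat_of_ord x.1 = v.1 /\ nat_of_ord x.2 = v.2) \/ (nat_of_ord x.1 = v.1.+1 /\ nat_of_ord x.2 = v.2.+1)).
    move=> [v1 v2] x; rewrite inE /f /=; have := ltn_ord v1; have := ltn_ord v2.
    case: (odd v2) => L2 L1 /andP[H1 H2]; rewrite !inE => /orP[]/eqP -> /=; rewrite !inordK //; lia.
  have uniqf : forall u v x, u \in D -> v \in D -> x \in f u -> x \in f v -> u = v.
    move=> [u1 u2] [v1 v2] x Hu Hv Hxu Hxv.
    have := memf _ _ Hu Hxu; have := memf _ _ Hv Hxv.
    move: Hu Hv; rewrite !inE /=.
    case Ou: (odd u2); case Ov: (odd v2) => /andP[Hu1 Hu2] /andP[Hv1 Hv2] /= Mv Mu;
    (suff E : nat_of_ord u1 = v1 /\ nat_of_ord u2 = v2 by case: E => /val_inj -> /val_inj ->); lia.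
  have fne : forall u, exists x, x \in f u.
    by move=> u; rewrite /f; case: odd; eexists; apply: set21.
  have Hinj : {in D &, injective f}.
    move=> u v Hu Hv E; have [x Hx] := fne u.
    by apply: (uniqf u v x) => //; rewrite -E.
  have edgef : forall v, v \in D -> is_edge (Hadj M.+1 N.+1) (f v).
    move=> [v1 v2]; rewrite inE /f /=; have := ltn_ord v1; have := ltn_ord v2.
    case: (odd v2) => L2 L1 /andP[H1 H2].
    + apply/existsP; exists (mk 0 v2); apply/existsP; exists (mk M v2.+1).
      rewrite eqxx andbT; apply/andP; split.
        apply/eqP => /(congr1 (fun p : ('I_M.+1 * 'I_N.+1) => nat_of_ord p.2)); rewrite /= !inordK //; lia.
      rewrite /Hadj /= !inordK //; lia.
    + apply/existsP; exists (mk v1 v2); apply/existsP; exists (mk v1.+1 v2.+1).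
      rewrite eqxx andbT; apply/andP; split.
        apply/eqP => /(congr1 (fun p : ('I_M.+1 * 'I_N.+1) => nat_of_ord p.2)); rewrite /= !inordK //; lia.
      rewrite /Hadj /= !inordK //; lia.
  have Hmatch : is_matching (Hadj M.+1 N.+1) (f @: D).
    apply/andP; split.
      by apply/forallP => A; apply/implyP => /imsetP[v Hv ->]; exact: edgef.
    apply/trivIsetP => A B /imsetP[u Hu ->] /imsetP[v Hv ->] Hne.
    rewrite -setI_eq0; apply/eqP/setP => x; rewrite !inE.
    apply/negbTE/andP => -[Hxu Hxv]; move/negP: Hne; apply.
    by rewrite (uniqf u v x).
  apply: (leq_trans (lower_sum M N)).
  rewrite -(card_pairP M.+1 N.+1 (fun i c => if odd c then (i == 0) && (c.+1 < N.+1)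
                        else (i.+1 < M.+1) && (c.+1 < N.+1))).
  rewrite -(card_in_imset Hinj).
  rewrite /match_num. have := (@leq_bigmax_cond _ (fun M0 => is_matching (Hadj M.+1 N.+1) M0) (fun M0 => #|M0|) _ Hmatch). exact.
Qed.
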